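(* Let $n\in\mathbb{N}$, let $p,q:\mathbb{R}^n\to\mathbb{R}$ be polynomials, let $\epsilon>0$, and let $a_j,b_j\in\mathbb{R}$ with $a_j<b_j$ for $j\in\{1,\dots,n\}$. Set $\Omega:=[a_1,b_1]\times[a_2,b_2]\times\dots\times[a_n,b_n]$ and assume that $\min_\Omega|q|>0$. Then \[ \left|\min_{\Omega,\epsilon}\frac{p}{q}-\min_\Omega\frac{p}{q}\right|\leq\frac{\epsilon}{\min_\Omega q^2},\qquad \left|\max_{\Omega,\epsilon}\frac{p}{q}-\max_\Omega\frac{p}{q}\right|\leq\frac{\epsilon}{\min_\Omega q^2}, \] and \[ \left|\left\|\frac{p}{q}\right\|_{L^\infty(\Omega,\epsilon)}-\left\|\frac{p}{q}\right\|_{L^\infty(\Omega)}\right|\leq\frac{\epsilon}{\min_\Omega q^2}. \]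
   Context: Chebyshev polynomials $T_m$ are defined by $T_m(\cos z)=\cos(mz)$. For a polynomial $P:\mathbb{C}^n\to\mathbb{C}$ written as $P(x^1,\dots,x^n)=\sum_{j_1,\dots,j_n} c_{j_1\dots j_n}T_{j_1}(x^1)\cdots T_{j_n}(x^n)$, its T-norm on $[-1,1]^n$ is $\sum|c_{j_1\dots j_n}|$; on a box $[a_1,b_1]\times\dots\times[a_n,b_n]$ the T-norm $\|P\|_{T(\cdot)}$ is the T-norm on $[-1,1]^n$ of $P$ composed with the affine maps $x\mapsto \frac{b_j-a_j}{2}x+\frac{a_j+b_j}{2}$ in each variable. With $\Omega$, $p$, $q$, $\epsilon$ as in the claim, set for $j\in\{1,\dots,n\}$ \[ M_j:=\min\left\{m\in\mathbb{N}: m\geq\frac{n}{\epsilon}(b_j-a_j)\|\partial_jp\,q-p\,\partial_jq\|_{T(\Omega)}\right\} \] and the grid \[ \Lambda:=\left\{\left(a_1+\tfrac{b_1-a_1}{M_1}k_1,\dots,a_n+\tfrac{b_n-a_n}{M_n}k_n\right): k_j\in[0,M_j]\cap\mathbb{Z}\right\}. \] Then by definition $\max_{\Omega,\epsilon}\frac{p}{q}:=\max_\Lambda\frac{p}{q}$, $\min_{\Omega,\epsilon}\frac{p}{q}:=\min_\Lambda\frac{p}{q}$, and $\left\|\frac{p}{q}\right\|_{L^\infty(\Omega,\epsilon)}:=\max_\Lambda\left|\frac{p}{q}\right|$. *)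

(* Defs.v *)
From HB Require Import structures.
From mathcomp Require Import all_boot all_order all_algebra.
From mathcomp Require Import boolp classical_sets reals.
From mathcomp Require Import mpoly.

Set Implicit Arguments.
Unset Strict Implicit.
Unset Printing Implicit Defensive.

Import Order.TTheory GRing.Theory Num.Theory.
Local Open Scope ring_scope.
Local Open Scope classical_set_scope.

(* Chebyshev polynomials of the first kind, T_0 = 1, T_1 = X,
   T_(m+2) = 2 X T_(m+1) - T_m ; equivalently T_m (cos z) = cos (m z). *)
Section Cheb.
Variable R : comNzRingType.
Fixpoint cheb_pair (m : nat) : {poly R} * {poly R} :=
  match m with
  | 0 => (1, 'X)
  | m'.+1 => let: (t0, t1) := cheb_pair m' in (t1, 2%:R *: ('X * t1) - t0)
  end.
Definition cheb (m : nat) : {poly R} := (cheb_pair m).1.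
End Cheb.

Section Defs.
Variables (R : realType) (n : nat).

Definition chebX (m : nat) (i : 'I_n) : {mpoly R[n]} :=
  (map_poly (@mpolyC n R) (cheb R m)).['X_i].

Definition chebM (m : 'X_{1..n}) : {mpoly R[n]} := \prod_(i < n) chebX (m i) i.

(* C (a polynomial used only as a finitely supported family of coefficients
   indexed by multi-indices) is a Chebyshev expansion of P *)
Definition cheb_expansion (C P : {mpoly R[n]}) : Prop :=
  P = \sum_(m <- msupp C) C@_m *: chebM m.

Definition Tnorm (P : {mpoly R[n]}) : R :=
  let C := xget 0 (cheb_expansion ^~ P) in \sum_(m <- msupp C) `|C@_m|.

Definition box_affine (a b : 'I_n -> R) : n.-tuple {mpoly R[n]} :=
  [tuple ((b i - a i) / 2%:R) *: 'X_i + ((a i + b i) / 2%:R)%:MP | i < n].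

Definition TnormBox (a b : 'I_n -> R) (P : {mpoly R[n]}) : R :=
  Tnorm (P \mPo box_affine a b).

Definition box (a b : 'I_n -> R) : set ('I_n -> R) :=
  [set x | forall i, a i <= x i <= b i].

Definition minOn (A : set ('I_n -> R)) (f : ('I_n -> R) -> R) : R :=
  inf [set f x | x in A].
Definition maxOn (A : set ('I_n -> R)) (f : ('I_n -> R) -> R) : R :=
  sup [set f x | x in A].

Definition ratf (p q : {mpoly R[n]}) : ('I_n -> R) -> R :=
  fun x => p.@[x] / q.@[x].

(* M_j := min { m in N : m >= (n/eps) (b_j - a_j) || d_j p q - p d_j q ||_T(Omega) } *)
Definition gridM (a b : 'I_n -> R) (eps : R) (p q : {mpoly R[n]}) (j : 'I_n) : nat :=
  `| Num.ceil ((n%:R / eps) * (b j - a j) *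
        TnormBox a b (p^`M(j) * q - p * q^`M(j))) |%N.

Definition grid (a b : 'I_n -> R) (eps : R) (p q : {mpoly R[n]}) : set ('I_n -> R) :=
  [set x | exists k : 'I_n -> nat, forall j,
      (k j <= gridM a b eps p q j)%N /\
      x j = a j + (b j - a j) / (gridM a b eps p q j)%:R * (k j)%:R].

Definition maxOmegaEps a b eps p q := maxOn (grid a b eps p q) (ratf p q).
Definition minOmegaEps a b eps p q := minOn (grid a b eps p q) (ratf p q).
Definition LinfOmegaEps a b eps p q :=
  maxOn (grid a b eps p q) (fun x => `|ratf p q x|).

End Defs.

(* Main.v *)
Require Import Defs.
From HB Require Import structures.
From mathcomp Require Import all_boot all_order all_algebra.
From mathcomp Require Import boolp classical_sets functions reals.
From mathcomp Require Import mpoly.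
From mathcomp Require Import topology normedtype derive realfun.
From mathcomp Require Import ring lra.
Import Order.TTheory GRing.Theory Num.Theory.
Import numFieldNormedType.Exports.
Local Open Scope ring_scope.
Local Open Scope classical_set_scope.
Section ChebBound.
Variable R : realType.

Fixpoint ce (t : R) (m : nat) : R * R :=
  match m with
  | 0 => (1, 0)
  | m'.+1 => let: (c, e) := ce t m' in (t * c - (1 - t ^+ 2) * e, c + t * e)
  end.

Lemma ce_inv t m : (ce t m).1 ^+ 2 + (1 - t ^+ 2) * (ce t m).2 ^+ 2 = 1.
Proof.
elim: m => [|m IH] /=; first by rewrite expr1n expr0n /= mulr0 addr0.
case: (ce t m) IH => c e /= IH; rewrite -[RHS]IH; ring.
Qed.

Lemma ce_rec t m : (ce t m.+2).1 = 2 * t * (ce t m.+1).1 - (ce t m).1.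
Proof. rewrite /=; case: (ce t m) => c e /=; ring. Qed.

Lemma cheb_ce t m : (cheb_pair R m).1.[t] = (ce t m).1 /\
                    (cheb_pair R m).2.[t] = (ce t m.+1).1.
Proof.
elim: m => [|m [IH1 IH2]].
  by split; rewrite /= ?hornerE //; ring.
rewrite [cheb_pair R m.+1]/=; case: (cheb_pair R m) IH1 IH2 => t0 t1 /= IH1 IH2.
split; first by [].
rewrite ce_rec -IH1 -IH2 hornerD hornerN hornerZ hornerM hornerX.
by rewrite mulrA.
Qed.

Lemma cheb_le1 t m : `|t| <= 1 -> `|(cheb R m).[t]| <= 1.
Proof.
move=> ht; rewrite /cheb (cheb_ce t m).1.
have h := ce_inv t m.
have h1 : 0 <= 1 - t ^+ 2.
  by move: ht; rewrite ler_norml => /andP[? ?]; nra.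
have : 0 <= (1 - t ^+ 2) * (ce t m).2 ^+ 2 by rewrite mulr_ge0 // sqr_ge0.
move: h; set c := (ce t m).1; set w := (_ * _ ^+ 2) => h hw.
rewrite ler_norml; apply/andP; split; nra.
Qed.
End ChebBound.

Section Expansion.
Variables (R : realType) (n : nat).
Implicit Types (P C : {mpoly R[n]}).

Definition hasexp P := exists C, cheb_expansion C P.

Lemma sum_superset C (F : 'X_{1..n} -> {mpoly R[n]}) r :
  uniq r -> {subset msupp C <= r} ->
  \sum_(m <- r) C@_m *: F m = \sum_(m <- msupp C) C@_m *: F m.
Proof.
move=> ur sub; rewrite (bigID (fun m => m \in msupp C)) /=.
rewrite [X in _ + X]big1 ?addr0; last first.
  by move=> m /memN_msupp_eq0 ->; rewrite scale0r.
rewrite -big_filter; apply: perm_big; apply: uniq_perm.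
- exact: filter_uniq.
- exact: msupp_uniq.
move=> m; rewrite mem_filter; case E: (m \in msupp C) => //=.
exact: sub.
Qed.

Lemma hasexp0 : hasexp 0.
Proof.
exists 0; rewrite /cheb_expansion.
have /eqP -> : msupp (0 : {mpoly R[n]}) == [::] by rewrite msupp_eq0.
by rewrite big_nil.
Qed.

Lemma hasexpD P1 P2 : hasexp P1 -> hasexp P2 -> hasexp (P1 + P2).
Proof.
move=> [C1 h1] [C2 h2]; exists (C1 + C2); rewrite /cheb_expansion.
set r := undup (msupp C1 ++ msupp C2).
have ur : uniq r by exact: undup_uniq.
rewrite -(sum_superset _ _ _ ur); last first.
  by move=> m /msuppD_le; rewrite mem_undup.
under eq_bigr do rewrite mcoeffD scalerDl.
rewrite big_split /= !sum_superset // -?h1 -?h2 //.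
- by move=> m hm; rewrite mem_undup mem_cat hm orbT.
- by move=> m hm; rewrite mem_undup mem_cat hm.
Qed.

Lemma hasexpZ c P : hasexp P -> hasexp (c *: P).
Proof.
move=> [C h]; exists (c *: C); rewrite /cheb_expansion.
rewrite -(sum_superset _ _ _ (msupp_uniq C)); last exact: msuppZ_le.
under eq_bigr do rewrite mcoeffZ -scalerA.
by rewrite -scaler_sumr -h.
Qed.

Lemma hasexp_sum (I : Type) (s : seq I) (F : I -> {mpoly R[n]}) :
  (forall i, hasexp (F i)) -> hasexp (\sum_(i <- s) F i).
Proof.
move=> h; elim/big_rec: _ => [|i x _ hx]; first exact: hasexp0.
exact: hasexpD.
Qed.

Lemma hasexp_chebM m : hasexp (chebM R m).
Proof.
exists 'X_[m]; rewrite /cheb_expansion msuppX big_seq1 mcoeffX eqxx.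
by rewrite scale1r.
Qed.

Definition evX (i : 'I_n) (p : {poly R}) : {mpoly R[n]} :=
  (map_poly (@mpolyC n R) p).['X_i].

Lemma evXD i p1 p2 : evX i (p1 + p2) = evX i p1 + evX i p2.
Proof. by rewrite /evX rmorphD hornerD. Qed.
Lemma evXZ i c p : evX i (c *: p) = c *: evX i p.
Proof.
by rewrite /evX map_polyZ hornerZ mul_mpolyC.
Qed.
Lemma evXM i p1 p2 : evX i (p1 * p2) = evX i p1 * evX i p2.
Proof. by rewrite /evX rmorphM hornerM. Qed.
Lemma evXX i : evX i 'X = 'X_i.
Proof. by rewrite /evX map_polyX hornerX. Qed.
Lemma evX1 i : evX i 1 = 1.
Proof. by rewrite /evX rmorph1 hornerC. Qed.

Lemma cheb0 : cheb R 0 = 1. Proof. by []. Qed.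
Lemma cheb1 : cheb R 1 = 'X. Proof. by []. Qed.
Lemma chebSS k : cheb R k.+2 = 2%:R *: ('X * cheb R k.+1) - cheb R k.
Proof.
rewrite /cheb /=; case: (cheb_pair R k) => t0 t1 /=. by [].
Qed.

Lemma Xcheb k : 'X * cheb R k =
  if k is k'.+1 then 2^-1 *: (cheb R k'.+2 + cheb R k') else cheb R 1.
Proof.
case: k => [|k]; first by rewrite cheb0 mulr1.
rewrite chebSS addrNK scalerA mulVf ?scale1r //.
by rewrite pnatr_eq0.
Qed.

Lemma chebM_split (m m' : 'X_{1..n}) (i : 'I_n) : (forall k, k != i -> m' k = m k) ->
  chebM R m' = chebX R (m' i) i * \prod_(k < n | k != i) chebX R (m k) k.
Proof.
move=> h; rewrite /chebM (bigD1 i) //=; congr (_ * _).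
by apply: eq_bigr => k /h ->.
Qed.

Lemma hasexp_XchebM i m : hasexp ('X_i * chebM R m).
Proof.
rewrite (chebM_split m m i) // mulrA.
have -> : 'X_i * chebX R (m i) i = evX i ('X * cheb R (m i)).
  by rewrite evXM evXX.
have hU : chebM R (m + U_(i))%MM = evX i (cheb R (m i).+1) *
    \prod_(k < n | k != i) chebX R (m k) k.
  rewrite (chebM_split m (m + U_(i))%MM i).
    by rewrite mnmDE mnm1E eqxx addn1.
  by move=> k hk; rewrite mnmDE mnm1E eq_sym (negbTE hk) addn0.
have hD : chebM R (m - U_(i))%MM = evX i (cheb R (m i).-1) *
    \prod_(k < n | k != i) chebX R (m k) k.
  rewrite (chebM_split m (m - U_(i))%MM i).
    by rewrite mnmBE mnm1E eqxx subn1.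
  by move=> k hk; rewrite mnmBE mnm1E eq_sym (negbTE hk) subn0.
rewrite Xcheb; move: hU hD; case: (m i) => [|k] hU hD.
  by rewrite -hU; exact: hasexp_chebM.
rewrite evXZ evXD -scalerAl mulrDl.
apply: hasexpZ; apply: hasexpD.
  by rewrite -hU; exact: hasexp_chebM.
by rewrite -hD; exact: hasexp_chebM.
Qed.

Lemma hasexp_X i P : hasexp P -> hasexp ('X_i * P).
Proof.
move=> [C ->]; rewrite mulr_sumr; apply: hasexp_sum => m.
rewrite -scalerAr; apply: hasexpZ; exact: hasexp_XchebM.
Qed.

Lemma hasexp_Xn i k P : hasexp P -> hasexp ('X_i ^+ k * P).
Proof.
move=> h; elim: k => [|k IH]; first by rewrite expr0 mul1r.
by rewrite exprS -mulrA; apply: hasexp_X.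
Qed.

Lemma chebM0 : chebM R (0%MM : 'X_{1..n}) = 1.
Proof.
rewrite /chebM big1 // => i _; rewrite mnm0E /chebX.
by rewrite -/(evX i _) cheb0 evX1.
Qed.

Lemma hasexp_all P : hasexp P.
Proof.
elim/mpolyind: P => [|c m p _ _ hp]; first exact: hasexp0.
apply: hasexpD => //; apply: hasexpZ.
rewrite mpolyXE_id.
elim/big_rec: _ => [|i x _ hx]; first by rewrite -chebM0; exact: hasexp_chebM.
by rewrite -[_ * x]/('X_i ^+ m i * x); apply: hasexp_Xn.
Qed.

End Expansion.
Arguments evX {R n} i p.
Arguments hasexp_all {R n} P.

Section TBound.
Variables (R : realType) (n : nat).

Lemma evX_eval (y : 'I_n -> R) i (p : {poly R}) : (evX i p).@[y] = p.[y i].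
Proof.
elim/poly_ind: p => [|p c IH].
  by rewrite /evX map_poly0 !horner0; exact: meval0.
rewrite evXD evXM evXX mevalD mevalM IH mevalXU hornerMXaddC.
by rewrite /evX map_polyC hornerC mevalC.
Qed.

Lemma chebX_eval (y : 'I_n -> R) k i : (chebX R k i).@[y] = (cheb R k).[y i].
Proof. exact: evX_eval. Qed.

Lemma chebM_le1 (y : 'I_n -> R) m : (forall i, `|y i| <= 1) ->
  `|(chebM R m).@[y]| <= 1.
Proof.
move=> hy; rewrite /chebM rmorph_prod normr_prod.
apply: prodr_ile1 => i _; rewrite normr_ge0 /= chebX_eval.
exact: cheb_le1.
Qed.

Lemma Tnorm_bound (P : {mpoly R[n]}) (y : 'I_n -> R) :
  (forall i, `|y i| <= 1) -> `|P.@[y]| <= Tnorm P.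
Proof.
move=> hy; rewrite /Tnorm.
have hC := xgetPex 0 (hasexp_all P).
set C := xget 0 _ in hC *.
rewrite {1}hC raddf_sum /=.
apply: (le_trans (ler_norm_sum _ _ _)); apply: ler_sum => m _.
rewrite mevalZ normrM.
apply: ler_piMr; first exact: normr_ge0.
exact: chebM_le1.
Qed.

Lemma TnormBox_bound (a b : 'I_n -> R) (P : {mpoly R[n]}) (w : 'I_n -> R) :
  (forall j, a j < b j) -> box a b w -> `|P.@[w]| <= TnormBox a b P.
Proof.
move=> hab hw; rewrite /TnormBox.
pose y := fun i => (2 * w i - a i - b i) / (b i - a i).
have hy : forall i, `|y i| <= 1.
  move=> i; have := hab i; have := hw i => /andP[h1 h2] h3.
  have hba : 0 < b i - a i by rewrite subr_gt0.
  rewrite /y normrM normfV (gtr0_norm hba) ler_pdivrMr // mul1r ler_norml.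
  apply/andP; split; lra.
have := Tnorm_bound (P \mPo box_affine a b) y hy.
apply: le_trans.
rewrite comp_mpoly_meval le_eqVlt; apply/orP; left; apply/eqP.
congr `|_|; apply: meval_eq => i.
rewrite /box_affine tnth_mktuple mevalD mevalZ mevalXU mevalC /y.
have := hab i => h3; have hba : b i - a i != 0 by rewrite subr_eq0 gt_eqF.
field; by rewrite hba.
Qed.
End TBound.
Arguments TnormBox_bound {R n a b} P {w} _ _.

Section Deriv.
Variables (R : realType) (n : nat).

Lemma mono_derive (c K t : R) (k : nat) :
  is_derive t 1 (fun x : R => c * (x ^+ k * K)) (c * (k%:R * t ^+ k.-1 * K)).
Proof.
have h := is_deriveM (is_derive_cst c t 1) (is_deriveM (is_deriveX k (is_derive_id t 1)) (is_derive_cst K t 1)).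
move: h; match goal with |- is_derive _ _ ?F _ -> _ => have -> : F = (fun x : R => c * (x ^+ k * K)) end.
  by apply/funext => x /=; rewrite !mulrfctE exprfctE.
move=> h; apply: is_derive_eq h _.
rewrite /= !mulrfctE exprfctE /= /cst !scaler0 add0r addr0.
rewrite /GRing.scale /= mulr1; ring.
Qed.

Definition upd (z : 'I_n -> R) (j : 'I_n) (t : R) : 'I_n -> R :=
  fun k => if k == j then t else z k.

Lemma mono_eval z j t (m : 'X_{1..n}) :
  \prod_(k < n) (upd z j t k) ^+ m k = t ^+ m j * \prod_(k < n | k != j) z k ^+ m k.
Proof.
rewrite (bigD1 j) //= /upd eqxx; congr (_ * _).
by apply: eq_bigr => k /negbTE ->.
Qed.

Lemma mono_evalB z j t (m : 'X_{1..n}) :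
  \prod_(k < n) (upd z j t k) ^+ (m - U_(j))%MM k =
  t ^+ (m j).-1 * \prod_(k < n | k != j) z k ^+ m k.
Proof.
rewrite (bigD1 j) //= /upd eqxx mnmBE mnm1E eqxx subn1; congr (_ * _).
apply: eq_bigr => k hk.
by rewrite (negbTE hk) mnmBE mnm1E eq_sym (negbTE hk) subn0.
Qed.

Lemma meval_derive (P : {mpoly R[n]}) (z : 'I_n -> R) (j : 'I_n) (t : R) :
  is_derive t 1 (fun x : R => P.@[upd z j x]) ((P^`M(j)).@[upd z j t]).
Proof.
elim/mpolyind: P => [|c m p _ _ IH].
  have -> : (fun x : R => (0 : {mpoly R[n]}).@[upd z j x]) = cst 0.
    by apply/funext => x; rewrite meval0.
  rewrite mderiv0 meval0; exact: is_derive_cst.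
set K := \prod_(k < n | k != j) z k ^+ m k.
have -> : (fun x : R => (c *: 'X_[m] + p).@[upd z j x]) =
    (fun x : R => c * (x ^+ (m j) * K)) + (fun x : R => p.@[upd z j x]).
  by apply/funext => x; rewrite addrfctE /= mevalD mevalZ mevalX mono_eval.
apply: is_derive_eq (is_deriveD (mono_derive c K t (m j)) IH) _.
rewrite mderivD mderivZ mderivX mevalD !mevalZ mevalX mono_evalB.
rewrite /K; ring.
Qed.

Lemma ratf_derive (p q : {mpoly R[n]}) (z : 'I_n -> R) (j : 'I_n) (t : R) : q.@[upd z j t] != 0 ->
  is_derive t 1 (fun x : R => ratf p q (upd z j x))
    ((p^`M(j) * q - p * q^`M(j)).@[upd z j t] / q.@[upd z j t] ^+ 2).
Proof.
move=> hq.
have h := is_deriveM (meval_derive p z j t) (is_deriveV hq (meval_derive q z j t)).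
move: h; match goal with |- is_derive _ _ ?F _ -> _ => have -> : F = (fun x : R => ratf p q (upd z j x)) end.
  by apply/funext => x; rewrite mulrfctE.
move=> h; apply: is_derive_eq h _.
rewrite mevalB !mevalM /GRing.scale /=.
field; exact: hq.
Qed.
End Deriv.
Arguments upd {R n} z j t.

Section Main.
Variables (R : realType) (n : nat) (p q : {mpoly R[n]}) (a b : 'I_n -> R) (Q : R).
Hypothesis hab : forall j, a j < b j.
Hypothesis hq : forall x, box a b x -> q.@[x] != 0.
Hypothesis hQ : 0 < Q.
Hypothesis hQx : forall x, box a b x -> Q <= q.@[x] ^+ 2.

Definition Nj (j : 'I_n) := p^`M(j) * q - p * q^`M(j).
Definition Lj (j : 'I_n) := TnormBox a b (Nj j) / Q.

Lemma box_a : box a b a.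
Proof. by move=> i; rewrite lexx ltW. Qed.

Lemma T_ge0 j : 0 <= TnormBox a b (Nj j).
Proof. exact: le_trans (normr_ge0 _) (TnormBox_bound (Nj _) hab box_a). Qed.

Lemma Lj_ge0 j : 0 <= Lj j.
Proof. by rewrite /Lj divr_ge0 ?T_ge0 ?ltW. Qed.

Lemma upd_box z j t : box a b z -> a j <= t <= b j -> box a b (upd z j t).
Proof. by move=> hz ht k; rewrite /upd; case: eqP => [->|_] //; exact: hz. Qed.

Lemma deriv_bound w j : box a b w ->
  `|(Nj j).@[w] / q.@[w] ^+ 2| <= Lj j.
Proof.
move=> hw; have hq2 : 0 < q.@[w] ^+ 2 by rewrite exprn_even_gt0 //= hq.
rewrite normrM normfV (ger0_norm (ltW hq2)) ler_pdivrMr //.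
have h1 := TnormBox_bound (Nj j) hab hw.
have h2 : Lj j * Q <= Lj j * q.@[w] ^+ 2 by rewrite ler_wpM2l ?Lj_ge0 ?hQx.
apply: le_trans h1 (le_trans _ h2).
by rewrite /Lj divfK ?gt_eqF.
Qed.

Lemma lip1_lt z j s t : box a b z -> a j <= s -> s < t -> t <= b j ->
  `|ratf p q (upd z j t) - ratf p q (upd z j s)| <= Lj j * `|t - s|.
Proof.
move=> hz has hst htb.
pose F := fun x : R => ratf p q (upd z j x).
pose dF := fun x : R => (Nj j).@[upd z j x] / q.@[upd z j x] ^+ 2.
have inb : forall x, s <= x <= t -> box a b (upd z j x).
  move=> x /andP[h1 h2]; apply: upd_box => //.
  by rewrite (le_trans has h1) (le_trans h2 htb).
have hd : forall x, s <= x <= t -> is_derive x 1 F (dF x).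
  move=> x hx; apply: ratf_derive; exact: hq (inb x hx).
have [c hc ->] : exists2 c, c \in `]s, t[%R & F t - F s = dF c * (t - s).
  apply: (@MVT R F dF s t hst).
    move=> x; rewrite in_itv /= => /andP[h1 h2]; apply: hd.
    by rewrite !ltW.
  apply: derivable_within_continuous => x; rewrite in_itv /= => hx.
  have := hd x hx; move=> H; exact: (@ex_derive _ _ _ _ _ _ _ H).
move: hc; rewrite in_itv /= => /andP[h1 h2].
rewrite normrM; apply: ler_wpM2r; first exact: normr_ge0.
apply: deriv_bound; apply: inb; by rewrite !ltW.
Qed.

Lemma lip1 z j s t : box a b z -> a j <= s <= b j -> a j <= t <= b j ->
  `|ratf p q (upd z j t) - ratf p q (upd z j s)| <= Lj j * `|t - s|.
Proof.
move=> hz /andP[hs1 hs2] /andP[ht1 ht2].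
case: (ltgtP s t) => [hst|hts|->].
- exact: lip1_lt.
- by rewrite distrC (distrC t); exact: lip1_lt.
- by rewrite !subrr normr0 mulr0.
Qed.

Definition mix (z y : 'I_n -> R) (k : nat) : 'I_n -> R :=
  fun i => if (i < k)%N then y i else z i.

Lemma lip z y : box a b z -> box a b y ->
  `|ratf p q z - ratf p q y| <= \sum_(j < n) Lj j * `|z j - y j|.
Proof.
move=> hz hy.
have hmix : forall k, box a b (mix z y k).
  by move=> k i; rewrite /mix; case: ifP => _; [exact: hy | exact: hz].
suff H : forall k, (k <= n)%N -> `|ratf p q z - ratf p q (mix z y k)| <=
    \sum_(j < n) (if (j < k)%N then Lj j * `|z j - y j| else 0).
  have := H n (leqnn n).
  have -> : mix z y n = y by apply/funext => i; rewrite /mix ltn_ord.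
  by under eq_bigr do rewrite ltn_ord.
elim => [|k IH] hk.
  have -> : mix z y 0 = z by apply/funext => i; rewrite /mix ltn0.
  by rewrite subrr normr0 big1 // => i _; rewrite ltn0.
have hk' : (k < n)%N by exact: hk.
pose j := Ordinal hk'.
have e1 : mix z y k.+1 = upd (mix z y k) j (y j).
  apply/funext => i; rewrite /mix /upd ltnS leq_eqVlt.
  case: (eqVneq i j) => [->|hij] /=; first by rewrite eqxx.
  have -> : (i == k :> nat) = false.
    by apply/negbTE; apply: contra hij => /eqP hi; apply/eqP/val_inj.
  by [].
have e2 : mix z y k = upd (mix z y k) j (z j).
  apply/funext => i; rewrite /mix /upd.
  case: (eqVneq i j) => [->|hij] //=; by rewrite ltnn.
have -> : \sum_(i < n) (if (i < k.+1)%N then Lj i * `|z i - y i| else 0) =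
  \sum_(i < n) (if (i < k)%N then Lj i * `|z i - y i| else 0) +
  \sum_(i < n) (if i == j then Lj i * `|z i - y i| else 0).
  rewrite -big_split /=; apply: eq_bigr => i _.
  rewrite ltnS leq_eqVlt.
  case: (eqVneq i j) => [->|hij] /=; first by rewrite eqxx ltnn add0r.
  have -> : (i == k :> nat) = false.
    by apply/negbTE; apply: contra hij => /eqP hi; apply/eqP/val_inj.
  by rewrite addr0.
have -> : \sum_(i < n) (if i == j then Lj i * `|z i - y i| else 0) =
    Lj j * `|z j - y j|.
  by rewrite -big_mkcond big_pred1_eq.
have IH' := IH (ltnW hk).
have -> : ratf p q z - ratf p q (mix z y k.+1) =
  (ratf p q z - ratf p q (mix z y k)) + (ratf p q (mix z y k) - ratf p q (mix z y k.+1)).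
  by rewrite addrA subrK.
apply: le_trans (ler_normD _ _) _.
apply: lerD => //.
rewrite {1}e2 e1 distrC.
rewrite -[X in _ <= _ * X]distrC.
by apply: lip1.
Qed.

Variable eps : R.
Hypothesis heps : 0 < eps.

Definition Mj j := gridM a b eps p q j.

Lemma Mj_bound j : (n%:R / eps) * (b j - a j) * TnormBox a b (Nj j) <= (Mj j)%:R.
Proof.
rewrite /Mj /gridM natr_absz.
apply: le_trans (ceil_ge _) _.
by rewrite ler_int ler_norm.
Qed.

Definition uj (x : 'I_n -> R) j := (x j - a j) / (b j - a j) * (Mj j)%:R.
Definition kj (x : 'I_n -> R) j : nat :=
  if Mj j == 0%N then 0%N else `|Num.floor (uj x j)|%N.
Definition gpt (x : 'I_n -> R) : 'I_n -> R :=
  fun j => a j + (b j - a j) / (Mj j)%:R * (kj x j)%:R.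

Lemma term_bound x j : a j <= x j <= b j ->
  (kj x j <= Mj j)%N /\ Lj j * `|x j - gpt x j| <= eps / (n%:R * Q).
Proof.
move=> /andP[hx1 hx2].
have hba : 0 < b j - a j by rewrite subr_gt0.
have hn : (0 < n)%N := leq_ltn_trans (leq0n _) (ltn_ord j).
have hn' : 0 < n%:R :> R by rewrite ltr0n.
have hT := T_ge0 j.
have hB := Mj_bound j.
have hrhs : 0 <= eps / (n%:R * Q) by rewrite divr_ge0 ?ltW // mulr_gt0.
rewrite /gpt /kj; case: eqP => hM.
  split => //.
  move: hB; rewrite hM => hB.
  have hy : 0 <= n%:R / eps * (b j - a j) * TnormBox a b (Nj j).
    by rewrite !mulr_ge0 // ?invr_ge0 ltW.
  have hy0 : n%:R / eps * (b j - a j) * TnormBox a b (Nj j) = 0.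
    by apply/eqP; rewrite eq_le hB hy.
  have hT0 : TnormBox a b (Nj j) = 0.
    move/eqP: hy0; rewrite !mulf_eq0 invr_eq0 (gt_eqF heps) (gt_eqF hba) (gt_eqF hn') /=.
    by move/eqP.
  by rewrite /Lj hT0 mul0r mul0r.
have hMpos : 0 < (Mj j)%:R :> R by rewrite ltr0n lt0n; apply/eqP.
set u := uj x j.
have hu0 : 0 <= u by rewrite /u /uj mulr_ge0 // divr_ge0 ?subr_ge0 // ltW.
have huM : u <= (Mj j)%:R.
  rewrite /u /uj; apply: ler_piMl; first exact: ltW.
  by rewrite ler_pdivrMr // mul1r lerD2r.
have hfl0 : 0 <= Num.floor u by rewrite floor_ge0.
have hk : (`|Num.floor u|%N)%:R = (Num.floor u)%:~R :> R.
  by rewrite natr_absz ger0_norm.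
have /andP[hf1 hf2] := floor_itv u.
split.
  rewrite -(ler_nat R) hk; exact: le_trans hf1 huM.
have hM0 : (Mj j)%:R != 0 :> R by rewrite gt_eqF.
have E : x j - (a j + (b j - a j) / (Mj j)%:R * (`|Num.floor u|%N)%:R) =
   (b j - a j) / (Mj j)%:R * (u - (Num.floor u)%:~R).
  rewrite hk /u /uj; field; rewrite hM0 andbT; by rewrite gt_eqF.
rewrite E normrM ger0_norm; last by rewrite divr_ge0 ?ltW.
rewrite ger0_norm; last by rewrite subr_ge0.
have h1 : u - (Num.floor u)%:~R <= 1 by move: hf2; rewrite intrD; lra.
apply: le_trans (_ : Lj j * ((b j - a j) / (Mj j)%:R) <= _).
  rewrite ler_wpM2l ?Lj_ge0 //.
  rewrite -[X in _ <= X]mulr1 ler_wpM2l // divr_ge0 ?ltW //.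
have -> : Lj j * ((b j - a j) / (Mj j)%:R) = eps / (n%:R * Q) *
   ((n%:R / eps * (b j - a j) * TnormBox a b (Nj j)) / (Mj j)%:R).
  rewrite /Lj; field.
  by rewrite hM0 !gt_eqF.
rewrite -[X in _ <= X]mulr1 ler_wpM2l //.
by rewrite ler_pdivrMr // mul1r.
Qed.

Lemma gpt_grid x : box a b x -> grid a b eps p q (gpt x).
Proof.
move=> hx; exists (kj x) => j; split => //.
by have [] := term_bound x j (hx j).
Qed.

Lemma grid_box g : grid a b eps p q g -> box a b g.
Proof.
move=> [k hk] j; have [hkM ->] := hk j.
have hba : 0 < b j - a j by rewrite subr_gt0.
case: (eqVneq (gridM a b eps p q j) 0%N) => [->|hM].
  by rewrite invr0 mulr0 mul0r addr0 lexx ltW.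
have hMpos : 0 < (gridM a b eps p q j)%:R :> R by rewrite ltr0n lt0n.
have h1 : 0 <= (b j - a j) / (gridM a b eps p q j)%:R * (k j)%:R.
  by rewrite mulr_ge0 // divr_ge0 // ltW.
have h2 : (b j - a j) / (gridM a b eps p q j)%:R * (k j)%:R <= b j - a j.
  rewrite mulrAC ler_pdivrMr //; apply: ler_wpM2l; first exact: ltW.
  by rewrite ler_nat.
apply/andP; split; lra.
Qed.

Lemma approx x : box a b x ->
  `|ratf p q x - ratf p q (gpt x)| <= eps / Q.
Proof.
move=> hx.
apply: le_trans (lip x (gpt x) hx (grid_box (gpt x) (gpt_grid x hx))) _.
apply: le_trans (_ : \sum_(j < n) eps / (n%:R * Q) <= _).
  apply: ler_sum => j _; exact: (term_bound x j (hx j)).2.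
rewrite sumr_const card_ord.
have [hn0|hn] := posnP n.
  by rewrite [X in _ *+ X]hn0 mulr0n divr_ge0 ?ltW.
rewrite -mulr_natr le_eqVlt; apply/orP; left; apply/eqP; field.
by rewrite !gt_eqF ?ltr0n.
Qed.

Lemma fbound : exists K, forall x, box a b x -> `|ratf p q x| <= K.
Proof.
exists (`|ratf p q a| + \sum_(j < n) Lj j * (b j - a j)) => x hx.
have h1 : `|ratf p q x| <= `|ratf p q x - ratf p q a| + `|ratf p q a|.
  by rewrite -{1}(subrK (ratf p q a) (ratf p q x)) ler_normD.
apply: le_trans h1 _; rewrite addrC lerD2l.
apply: le_trans (lip x a hx box_a) _.
apply: ler_sum => j _; apply: ler_wpM2l; first exact: Lj_ge0.
have /andP[h2 h3] := hx j.
by rewrite ger0_norm ?subr_ge0 // lerD2r.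
Qed.

End Main.
Arguments box_a {R n a b} hab.
Arguments grid_box {R n p q a b} hab {eps} g.
Arguments gpt_grid {R n p q a b Q} hab hQ {eps} heps x.
Arguments fbound {R n p q a b Q} hab hq hQ hQx.
Arguments approx {R n p q a b Q} hab hq hQ hQx {eps} heps x.

Lemma approx_inf_sup (R : realType) (T : Type) (A B : set T) (h : T -> R) (d : R) :
  A `<=` B -> A !=set0 -> (exists K, forall x, B x -> `|h x| <= K) ->
  (forall x, B x -> exists2 g, A g & `|h x - h g| <= d) ->
  `|inf (h @` A) - inf (h @` B)| <= d /\ `|sup (h @` A) - sup (h @` B)| <= d.
Proof.
move=> AB [g0 Ag0] [K hK] happ.
have hd : 0 <= d.
  have [g _ hg] := happ g0 (AB _ Ag0); exact: le_trans (normr_ge0 _) hg.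
have hBne : (h @` B) !=set0 by exists (h g0); exists g0 => //; exact: AB.
have hAne : (h @` A) !=set0 by exists (h g0), g0.
have hKx : forall x, B x -> - K <= h x <= K by move=> x /hK; rewrite ler_norml.
have lbB : has_lbound (h @` B).
  by exists (- K) => _ [x Bx <-]; have /andP[] := hKx x Bx.
have lbA : has_lbound (h @` A).
  by exists (- K) => _ [x /AB Bx <-]; have /andP[] := hKx x Bx.
have ubB : has_ubound (h @` B).
  by exists K => _ [x Bx <-]; have /andP[] := hKx x Bx.
have ubA : has_ubound (h @` A).
  by exists K => _ [x /AB Bx <-]; have /andP[] := hKx x Bx.
split.
  have i1 : inf (h @` B) <= inf (h @` A).
    apply: lb_le_inf hAne _ => _ [g Ag <-]; apply: (ge_inf lbB).
    by exists g => //; exact: AB.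
  have i2 : inf (h @` A) - d <= inf (h @` B).
    apply: lb_le_inf hBne _ => _ [x Bx <-]; have [g Ag hg] := happ x Bx.
    have : inf (h @` A) <= h g by apply: (ge_inf lbA); exists g.
    move: hg; rewrite ler_norml => /andP[? ?]; lra.
  rewrite ler_norml; apply/andP; split; lra.
have s1 : sup (h @` A) <= sup (h @` B).
  apply: ge_sup hAne _ => _ [g Ag <-]; apply: (ub_le_sup ubB).
  by exists g => //; exact: AB.
have s2 : sup (h @` B) <= sup (h @` A) + d.
  apply: ge_sup hBne _ => _ [x Bx <-]; have [g Ag hg] := happ x Bx.
  have : h g <= sup (h @` A) by apply: (ub_le_sup ubA); exists g.
  move: hg; rewrite ler_norml => /andP[? ?]; lra.
rewrite ler_norml; apply/andP; split; lra.
Qed.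


Theorem lemma5p22 (R : realType) (n : nat) (p q : {mpoly R[n]}) (eps : R)
    (a b : 'I_n -> R) :
  0 < eps ->
  (forall j, a j < b j) ->
  0 < minOn (box a b) (fun x => `|q.@[x]|) ->
  let Omega := box a b in
  let qmin2 := minOn Omega (fun x => q.@[x] ^+ 2) in
  [/\ `|minOmegaEps a b eps p q - minOn Omega (ratf p q)| <= eps / qmin2,
      `|maxOmegaEps a b eps p q - maxOn Omega (ratf p q)| <= eps / qmin2 &
      `|LinfOmegaEps a b eps p q - maxOn Omega (fun x => `|ratf p q x|)|
         <= eps / qmin2].
Proof.
move=> heps hab hmin Omega qmin2.
rewrite /qmin2 /Omega.
set m0 := minOn _ _ in hmin.
set Q := minOn (box a b) (fun x => q.@[x] ^+ 2).
rewrite /minOmegaEps /maxOmegaEps /LinfOmegaEps /minOn /maxOn.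
have hba := box_a hab.
have hlb0 : has_lbound [set `|q.@[x]| | x in box a b].
  by exists 0 => _ [x _ <-]; exact: normr_ge0.
have hqx : forall x, box a b x -> m0 <= `|q.@[x]|.
  by move=> x hx; apply: (ge_inf hlb0); exists x.
have hq : forall x, box a b x -> q.@[x] != 0.
  by move=> x hx; rewrite -normr_gt0; exact: lt_le_trans hmin (hqx x hx).
have hQx : forall x, box a b x -> Q <= q.@[x] ^+ 2.
  move=> x hx; apply: ge_inf; last by exists x.
  by exists 0 => _ [y _ <-]; exact: sqr_ge0.
have hQ : 0 < Q.
  apply: (@lt_le_trans _ _ (m0 ^+ 2)); first exact: exprn_gt0.
  apply: lb_le_inf; first by exists (q.@[a] ^+ 2), a.
  move=> _ [x hx <-]; have := hqx x hx.
  rewrite -[q.@[x] ^+ 2]real_normK ?num_real //.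
  set t := `|q.@[x]| => ht; nra.
have AB : grid a b eps p q `<=` box a b.
  by move=> g; exact: (grid_box hab).
have Ane : grid a b eps p q !=set0.
  by exists (gpt R n p q a b eps a); exact: (gpt_grid hab hQ heps).
have [K hK] := fbound (p := p) hab hq hQ hQx.
have happ : forall x, box a b x -> exists2 g, grid a b eps p q g &
    `|ratf p q x - ratf p q g| <= eps / Q.
  move=> x hx; exists (gpt R n p q a b eps x).
    exact: (gpt_grid hab hQ heps).
  exact: (approx hab hq hQ hQx heps).
have [h1 h2] := @approx_inf_sup R _ _ _ (ratf p q) _ AB Ane (ex_intro _ K hK) happ.
have hK' : forall x, box a b x -> `| `|ratf p q x| | <= K.
  by move=> x hx; rewrite normr_id; exact: hK.
have happ' : forall x, box a b x -> exists2 g, grid a b eps p q g &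
    `| `|ratf p q x| - `|ratf p q g| | <= eps / Q.
  move=> x hx; have [g hg hg'] := happ x hx; exists g => //.
  exact: le_trans (ler_dist_dist _ _) hg'.
have [_ h3] := @approx_inf_sup R _ _ _ (fun x => `|ratf p q x|) _ AB Ane
  (ex_intro _ K hK') happ'.
by split.
Qed.
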